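(* Let $\mathbb{K}$ be an algebraically closed field of characteristic zero and let $A,B\in M_3(\mathbb{K})$. Then $$\det\bigl(I,\,A,\,A^2,\,B,\,B^2,\,AB,\,BA,\,[A,[A,B]],\,[B,[B,A]]\bigr)=-9\,\bigl(\det [A,B]\bigr)^2\,H([A,B]).$$ Consequently, if $\det[A,B]\neq 0$ and $H([A,B])\neq 0$, then the nine matrices $I, A, A^2, B, B^2, AB, BA, [A,[A,B]], [B,[B,A]]$ form a basis of $M_3(\mathbb{K})$ as a $\mathbb{K}$-vector space.
   Context: $M_3(\mathbb{K})$ denotes the algebra of $3\times 3$ matrices over $\mathbb{K}$, and $I$ is the $3\times 3$ identity matrix. For $X,Y\in M_3(\mathbb{K})$, $[X,Y]=XY-YX$ is the commutator. For $M\in M_3(\mathbb{K})$, $H(M):=\frac{\operatorname{tr}(M)^2-\operatorname{tr}(M^2)}{2}$. For nine matrices $M_1,\dots,M_9\in M_3(\mathbb{K})$, $\det(M_1,\dots,M_9)$ denotes the determinant of the $9\times 9$ matrix whose $j$-th column is the vector $\bigl((M_j)_{11},(M_j)_{12},(M_j)_{13},(M_j)_{21},(M_j)_{22},(M_j)_{23},(M_j)_{31},(M_j)_{32},(M_j)_{33}\bigr)^T$ of entries of $M_j$ listed in row-major order. *)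

(* Defs.v *)
From HB Require Import structures.
From mathcomp Require Import all_boot all_order all_algebra.
Set Implicit Arguments. Unset Strict Implicit. Unset Printing Implicit Defensive.
Import Order.TTheory GRing.Theory.
Local Open Scope ring_scope.

Definition comm3 {K : fieldType} (X Y : 'M[K]_3) : 'M[K]_3 := X *m Y - Y *m X.

Definition H3 {K : fieldType} (M : 'M[K]_3) : K :=
  ((\tr M) ^+ 2 - \tr (M *m M)) / 2%:R.

(* The 9x9 matrix whose j-th column is the row-major vector of entries of
   the j-th matrix in s (index k in 0..8 <-> entry (k/3, k mod 3)). *)
Definition cols9 {K : fieldType} (s : seq 'M[K]_3) : 'M[K]_9 :=
  \matrix_(k < 9, j < 9)
     (nth 0 s j) (inord (k %/ 3)) (inord (k %% 3)).

Definition det9 {K : fieldType} (s : seq 'M[K]_3) : K := \det (cols9 s).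

Definition nine {K : fieldType} (A B : 'M[K]_3) : seq 'M[K]_3 :=
  [:: 1%:M; A; A *m A; B; B *m B; A *m B; B *m A;
      comm3 A (comm3 A B); comm3 B (comm3 B A)].

(* Main.v *)
Require Import Defs.
From HB Require Import structures.
From mathcomp Require Import all_boot all_order all_algebra.
Import GRing.Theory.
Local Open Scope ring_scope.
From mathcomp Require Import ring zify.
Set Implicit Arguments. Unset Strict Implicit. Unset Printing Implicit Defensive.

Section Engine.
Variable R : comNzRingType.
Definition mxf n (f : nat -> nat -> R) : 'M[R]_n := \matrix_(i<n,j<n) f i j.

Lemma expand_nat n (f : nat -> nat -> R) : \det (mxf n.+1 f) =
  \sum_(j<n.+1) f 0%N j * ((-1)^+j * \det (mxf n (fun x y => f x.+1 (bump j y)))).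
Proof.
rewrite /mxf (expand_det_row _ 0); apply: eq_bigr => j _; rewrite mxE /cofactor.
congr (_ * (_ * _)).
by congr (\det _); apply/matrixP => i k; rewrite !mxE.
Qed.

Fixpoint detfz n (z : nat -> nat -> bool) (f : nat -> nat -> R) : R :=
 match n with
 | 0 => 1
 | m.+1 => foldr (fun j acc => if z 0%N j then acc else
              (if odd j then -1 else 1) * f 0%N j *
              detfz m (fun x y => z x.+1 (bump j y)) (fun x y => f x.+1 (bump j y)) + acc)
            0 (iota 0 m.+1)
 end.

Lemma big_foldr (r : seq nat) (F : nat -> R) :
  \sum_(j <- r) F j = foldr (fun j acc => F j + acc) 0 r.
Proof. by elim: r => [|x r IH]; rewrite ?big_nil ?big_cons ?IH. Qed.

Lemma detfzE n (z : nat -> nat -> bool) (f : nat -> nat -> R) : (forall i j, (i < n)%N -> (j < n)%N -> z i j -> f i j = 0) ->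
  \det (mxf n f) = detfz n z f.
Proof.
elim: n z f => [|n IH] z f Hz; first by rewrite det_mx00.
rewrite expand_nat.
rewrite -(big_mkord xpredT (fun j => f 0%N j * ((-1)^+j * \det (mxf n (fun x y => f x.+1 (bump j y)))))).
rewrite /index_iota subn0.
have aux : forall r, (forall j, j \in r -> (j < n.+1)%N) ->
  \sum_(j <- r) f 0%N j * ((-1)^+j * \det (mxf n (fun x y => f x.+1 (bump j y)))) =
  foldr (fun j acc => if z 0%N j then acc else
              (if odd j then -1 else 1) * f 0%N j *
              detfz n (fun x y => z x.+1 (bump j y)) (fun x y => f x.+1 (bump j y)) + acc)
            0 r.
  elim => [|j r IHr] Hr; first by rewrite big_nil.
  rewrite big_cons /= IHr; last by move=> k kr; apply: Hr; rewrite inE kr orbT.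
  have jn : (j < n.+1)%N by apply: Hr; rewrite inE eqxx.
  case zj: (z 0%N j).
    by rewrite Hz // mul0r add0r.
  rewrite (IH (fun x y => z x.+1 (bump j y))); last first.
    move=> x y xn yn /Hz; apply => //.
    by rewrite /bump; case: (j <= y)%N; rewrite /= ?add1n ?add0n // ltnS ltnW.
  congr (_ + _); rewrite -signr_odd; case: (odd j); rewrite ?expr1 ?expr0; ring.
by apply: aux => j; rewrite mem_iota.
Qed.

Lemma detfzE0 n f : \det (mxf n f) = detfz n (fun _ _ => false) f.
Proof. by apply: detfzE. Qed.

Fixpoint detfp d n (z : nat -> nat -> bool) (f : nat -> nat -> R) : R :=
 match d, n with
 | 0, _ => \det (mxf n f)
 | _.+1, 0 => 1
 | d'.+1, m.+1 => foldr (fun j acc => if z 0%N j then acc else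
              (if odd j then -1 else 1) * f 0%N j *
              detfp d' m (fun x y => z x.+1 (bump j y)) (fun x y => f x.+1 (bump j y)) + acc)
            0 (iota 0 m.+1)
 end.

Lemma detfpE d n (z : nat -> nat -> bool) (f : nat -> nat -> R) :
  (forall i j, (i < n)%N -> (j < n)%N -> z i j -> f i j = 0) ->
  \det (mxf n f) = detfp d n z f.
Proof.
elim: d n z f => [|d IH] n z f Hz; first by [].
case: n Hz => [|n] Hz; first by rewrite det_mx00.
rewrite expand_nat.
rewrite -(big_mkord xpredT (fun j => f 0%N j * ((-1)^+j * \det (mxf n (fun x y => f x.+1 (bump j y)))))).
rewrite /index_iota subn0.
have aux : forall r, (forall j, j \in r -> (j < n.+1)%N) ->
  \sum_(j <- r) f 0%N j * ((-1)^+j * \det (mxf n (fun x y => f x.+1 (bump j y)))) =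
  foldr (fun j acc => if z 0%N j then acc else
              (if odd j then -1 else 1) * f 0%N j *
              detfp d n (fun x y => z x.+1 (bump j y)) (fun x y => f x.+1 (bump j y)) + acc)
            0 r.
  elim => [|j r IHr] Hr; first by rewrite big_nil.
  rewrite big_cons /= IHr; last by move=> k kr; apply: Hr; rewrite inE kr orbT.
  have jn : (j < n.+1)%N by apply: Hr; rewrite inE eqxx.
  case zj: (z 0%N j).
    by rewrite Hz // mul0r add0r.
  rewrite (IH n (fun x y => z x.+1 (bump j y))); last first.
    move=> x y xn yn /Hz; apply => //.
    by rewrite /bump; case: (j <= y)%N; rewrite /= ?add1n ?add0n // ltnS ltnW.
  congr (_ + _); rewrite -signr_odd; case: (odd j); rewrite ?expr1 ?expr0; ring.
by apply: aux => j; rewrite mem_iota.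
Qed.

Lemma mxf_ext n (f g : nat -> nat -> R) :
  (forall i j, (i < n)%N -> (j < n)%N -> f i j = g i j) -> mxf n f = mxf n g.
Proof. by move=> H; apply/matrixP => i j; rewrite !mxE H. Qed.

Lemma mxf_tr n (f : nat -> nat -> R) : (mxf n f)^T = mxf n (fun i j => f j i).
Proof. by apply/matrixP => i j; rewrite !mxE. Qed.

Definition zdiag (k j : nat) : bool := (j < 3)%N && (k \notin [:: 0; 4; 8]%N).

Lemma det9_blockE (f : nat -> nat -> R) :
  (forall k j, (k < 9)%N -> (j < 9)%N -> zdiag k j -> f k j = 0) ->
  \det (mxf 9 f) =
  - ((f 0%N 0%N * (f 4%N 1%N * f 8%N 2%N - f 4%N 2%N * f 8%N 1%N)
    - f 0%N 1%N * (f 4%N 0%N * f 8%N 2%N - f 4%N 2%N * f 8%N 0%N)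
    + f 0%N 2%N * (f 4%N 0%N * f 8%N 1%N - f 4%N 1%N * f 8%N 0%N)) *
   \det (mxf 6 (fun i j => f (nth 0%N [:: 1;2;3;5;6;7]%N i) j.+3))).
Proof.
move=> Hz; move HD: (\det (mxf 6 _)) => D6.
have help : forall h, (forall x y, (x < 6)%N -> (y < 6)%N -> h x y = f (nth 0%N [:: 1;2;3;5;6;7]%N y) x.+3) ->
   \det (mxf 6 h) = D6.
  move=> h Hh; rewrite -HD -det_tr mxf_tr; congr (\det _); apply: mxf_ext => i j Hi Hj.
  by rewrite Hh.
rewrite -det_tr mxf_tr (@detfpE 3 9 (fun j k => zdiag k j)); last first.
  by move=> i j Hi Hj /Hz; apply.
simpl.
rewrite !help; first ring.
all: by move=> x y _ Hy; case: y Hy => [|[|[|[|[|[|y]]]]]] Hy.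
Qed.

Definition mk33 (a b c d e f g h i : R) : 'M[R]_3 :=
  \matrix_(r < 3, s < 3) nth 0 (nth [::] [:: [:: a;b;c];[:: d;e;f];[:: g;h;i]] r) s.

Lemma mk33M (a b c d e f g h i a' b' c' d' e' f' g' h' i' : R) :
  mk33 a b c d e f g h i *m mk33 a' b' c' d' e' f' g' h' i' =
  mk33 (a*a'+b*d'+c*g') (a*b'+b*e'+c*h') (a*c'+b*f'+c*i')
       (d*a'+e*d'+f*g') (d*b'+e*e'+f*h') (d*c'+e*f'+f*i')
       (g*a'+h*d'+i*g') (g*b'+h*e'+i*h') (g*c'+h*f'+i*i').
Proof.
apply/matrixP => r s; rewrite !mxE !big_ord_recl big_ord0 !mxE /=.
by case: r => [[|[|[|]]] ?] //=; case: s => [[|[|[|]]] ?] //=; ring.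
Qed.

Lemma mk33B (a b c d e f g h i a' b' c' d' e' f' g' h' i' : R) :
  mk33 a b c d e f g h i - mk33 a' b' c' d' e' f' g' h' i' =
  mk33 (a-a') (b-b') (c-c') (d-d') (e-e') (f-f') (g-g') (h-h') (i-i').
Proof.
apply/matrixP => r s; rewrite !mxE /=.
by case: r => [[|[|[|]]] ?] //=; case: s => [[|[|[|]]] ?] //=; ring.
Qed.

Lemma mk33_1 : (1%:M : 'M[R]_3) = mk33 1 0 0 0 1 0 0 0 1.
Proof.
apply/matrixP => r s; rewrite !mxE /=.
by case: r => [[|[|[|]]] ?] //=; case: s => [[|[|[|]]] ?] //=.
Qed.

Definition e33 (M : 'M[R]_3) (r s : nat) := M (inord r) (inord s).

Lemma mx33E (M : 'M[R]_3) : M = mk33 (e33 M 0 0) (e33 M 0 1) (e33 M 0 2)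
  (e33 M 1 0) (e33 M 1 1) (e33 M 1 2) (e33 M 2 0) (e33 M 2 1) (e33 M 2 2).
Proof.
apply/matrixP => r s; rewrite !mxE /e33.
case: r => [[|[|[|]]] Hr] //=; case: s => [[|[|[|]]] Hs] //=;
  by congr (M _ _); apply/val_inj; rewrite /= inordK.
Qed.

Definition vec (M : 'M[R]_3) : seq R :=
  [:: e33 M 0 0; e33 M 0 1; e33 M 0 2; e33 M 1 0; e33 M 1 1; e33 M 1 2;
      e33 M 2 0; e33 M 2 1; e33 M 2 2].

Lemma vec_mk33 (a b c d e f g h i : R) : vec (mk33 a b c d e f g h i) = [:: a;b;c;d;e;f;g;h;i].
Proof. by rewrite /vec /e33 !mxE !inordK. Qed.

Definition cols9R (s : seq 'M[R]_3) : 'M[R]_9 :=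
  \matrix_(k < 9, j < 9) (nth 0 s j) (inord (k %/ 3)) (inord (k %% 3)).

Lemma cols9_vec (s : seq 'M[R]_3) : size s = 9%N ->
  cols9R s = mxf 9 (fun k j => nth 0 (nth [::] (map vec s) j) k).
Proof.
move=> Hs; apply/matrixP => k j; rewrite !mxE.
rewrite (nth_map 0); last by rewrite Hs.
set M := nth 0 s j; rewrite /vec /e33.
by case: k => [[|[|[|[|[|[|[|[|[|]]]]]]]]] ?].
Qed.

Definition comm3R (X Y : 'M[R]_3) : 'M[R]_3 := X *m Y - Y *m X.
Definition nineR (A B : 'M[R]_3) : seq 'M[R]_3 :=
  [:: 1%:M; A; A *m A; B; B *m B; A *m B; B *m A;
      comm3R A (comm3R A B); comm3R B (comm3R B A)].
Definition DR (A B : 'M[R]_3) : R :=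
  2%:R * \det (cols9R (nineR A B)) +
  9%:R * \det (comm3R A B) ^+ 2 * (\tr (comm3R A B) ^+ 2 - \tr (comm3R A B *m comm3R A B)).


Lemma det_mk33 (a b c d e f g h i : R) : \det (mk33 a b c d e f g h i) =
  a * (e * i - f * h) - b * (d * i - f * g) + c * (d * h - e * g).
Proof.
have -> : mk33 a b c d e f g h i = mxf 3 (fun r s => nth 0 (nth [::] [:: [:: a;b;c];[:: d;e;f];[:: g;h;i]] r) s) by [].
rewrite detfzE0 /=; ring.
Qed.

Lemma tr_mk33 (a b c d e f g h i : R) : \tr (mk33 a b c d e f g h i) = a + e + i.
Proof. by rewrite /mxtrace !big_ord_recl big_ord0 !mxE /=; ring. Qed.


Lemma nine_diag (a0 a1 a2 b00 b01 b02 b10 b11 b12 b20 b21 b22 : R) :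
  nineR (mk33 a0 0 0 0 a1 0 0 0 a2) (mk33 b00 b01 b02 b10 b11 b12 b20 b21 b22) =
  [:: mk33 (1) (0) (0) (0) (1) (0) (0) (0) (1);
  mk33 (a0) (0) (0) (0) (a1) (0) (0) (0) (a2);
  mk33 (a0^+2) (0) (0) (0) (a1^+2) (0) (0) (0) (a2^+2);
  mk33 (b00) (b01) (b02) (b10) (b11) (b12) (b20) (b21) (b22);
  mk33 (b00*b00 + b01*b10 + b02*b20) (b00*b01 + b01*b11 + b02*b21) (b00*b02 + b01*b12 + b02*b22) (b10*b00 + b11*b10 + b12*b20) (b10*b01 + b11*b11 + b12*b21) (b10*b02 + b11*b12 + b12*b22) (b20*b00 + b21*b10 + b22*b20) (b20*b01 + b21*b11 + b22*b21) (b20*b02 + b21*b12 + b22*b22);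
  mk33 (a0*b00) (a0*b01) (a0*b02) (a1*b10) (a1*b11) (a1*b12) (a2*b20) (a2*b21) (a2*b22);
  mk33 (a0*b00) (a1*b01) (a2*b02) (a0*b10) (a1*b11) (a2*b12) (a0*b20) (a1*b21) (a2*b22);
  mk33 ((a0-a0)^+2*b00) ((a0-a1)^+2*b01) ((a0-a2)^+2*b02) ((a1-a0)^+2*b10) ((a1-a1)^+2*b11) ((a1-a2)^+2*b12) ((a2-a0)^+2*b20) ((a2-a1)^+2*b21) ((a2-a2)^+2*b22);
  mk33 (b00*b00*(a0+a0-2%:R*a0) + b01*b10*(a0+a0-2%:R*a1) + b02*b20*(a0+a0-2%:R*a2)) (b00*b01*(a0+a1-2%:R*a0) + b01*b11*(a0+a1-2%:R*a1) + b02*b21*(a0+a1-2%:R*a2)) (b00*b02*(a0+a2-2%:R*a0) + b01*b12*(a0+a2-2%:R*a1) + b02*b22*(a0+a2-2%:R*a2)) (b10*b00*(a1+a0-2%:R*a0) + b11*b10*(a1+a0-2%:R*a1) + b12*b20*(a1+a0-2%:R*a2)) (b10*b01*(a1+a1-2%:R*a0) + b11*b11*(a1+a1-2%:R*a1) + b12*b21*(a1+a1-2%:R*a2)) (b10*b02*(a1+a2-2%:R*a0) + b11*b12*(a1+a2-2%:R*a1) + b12*b22*(a1+a2-2%:R*a2)) (b20*b00*(a2+a0-2%:R*a0) + b21*b10*(a2+a0-2%:R*a1) + b22*b20*(a2+a0-2%:R*a2)) (b20*b01*(a2+a1-2%:R*a0) + b21*b11*(a2+a1-2%:R*a1) + b22*b21*(a2+a1-2%:R*a2))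 (b20*b02*(a2+a2-2%:R*a0) + b21*b12*(a2+a2-2%:R*a1) + b22*b22*(a2+a2-2%:R*a2))].
Proof.
rewrite /nineR /comm3R mk33_1 !(mk33M, mk33B).
by congr [:: _; _; _; _; _; _; _; _; _]; congr mk33; ring.
Qed.

Lemma Ddiag (a0 a1 a2 b00 b01 b02 b10 b11 b12 b20 b21 b22 : R) :
  DR (mk33 a0 0 0 0 a1 0 0 0 a2) (mk33 b00 b01 b02 b10 b11 b12 b20 b21 b22) = 0.
Proof.
rewrite /DR nine_diag /comm3R !(mk33M, mk33B) !det_mk33 !tr_mk33.
rewrite cols9_vec // [map _ _]/= !vec_mk33.
rewrite det9_blockE; last first.
  move=> k j Hk Hj.
  case: k Hk => [|[|[|[|[|[|[|[|[|k]]]]]]]]] Hk //;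
  case: j Hj => [|[|[|[|[|[|[|[|[|j]]]]]]]]] Hj //; rewrite /zdiag /= => // _.
rewrite detfzE0.
simpl.
ring.
Qed.

Definition LPm (P : 'M[R]_3) : 'M[R]_9 :=
  mxf 9 (fun k k' => if (k %% 3 == k' %% 3)%N then e33 P (k %/ 3) (k' %/ 3) else 0).
Definition RQm (Q : 'M[R]_3) : 'M[R]_9 :=
  mxf 9 (fun k k' => if (k %/ 3 == k' %/ 3)%N then e33 Q (k' %% 3) (k %% 3) else 0).

Lemma nth_map0 (g : 'M[R]_3 -> 'M[R]_3) (s : seq 'M[R]_3) j : g 0 = 0 ->
  nth 0 (map g s) j = g (nth 0 s j).
Proof.
move=> g0; case: (ltnP j (size s)) => Hj; first by rewrite (nth_map 0).
by rewrite !nth_default ?size_map.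
Qed.

Lemma cols9_mulL P s : cols9R (map (mulmx P) s) = LPm P *m cols9R s.
Proof.
apply/matrixP => k j; rewrite mxE nth_map0 ?mulmx0 //.
set X := nth 0 s j; rewrite {1}(mx33E X) {1}(mx33E P) mk33M.
rewrite !mxE !big_ord_recl big_ord0 !mxE /e33.
case: k => [[|[|[|[|[|[|[|[|[|k]]]]]]]]] Hk] //=; rewrite /mk33 ?mxE ?inordK //=; ring.
Qed.

Lemma cols9_mulR Q s : cols9R (map (mulmx^~ Q) s) = RQm Q *m cols9R s.
Proof.
apply/matrixP => k j; rewrite mxE nth_map0 ?mul0mx //.
set X := nth 0 s j; rewrite {1}(mx33E X) {1}(mx33E Q) mk33M.
rewrite !mxE !big_ord_recl big_ord0 !mxE /e33.
case: k => [[|[|[|[|[|[|[|[|[|k]]]]]]]]] Hk] //=; rewrite /mk33 ?mxE ?inordK //=; ring.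
Qed.

Lemma det_LPm P : \det (LPm P) = \det P ^+ 3.
Proof.
rewrite /LPm (@detfzE 9%N (fun k k' => (k %% 3 != k' %% 3)%N)); last first.
  by move=> i j _ _ /negbTE ->.
rewrite [in RHS](mx33E P) det_mk33.
simpl. ring.
Qed.

Lemma det_RQm Q : \det (RQm Q) = \det Q ^+ 3.
Proof.
rewrite /RQm (@detfzE 9%N (fun k k' => (k %/ 3 != k' %/ 3)%N)); last first.
  by move=> i j _ _ /negbTE ->.
rewrite [in RHS](mx33E Q) det_mk33.
simpl. ring.
Qed.


Section Conj.
Variables (P Q : 'M[R]_3).
Hypotheses (PQ : P *m Q = 1%:M) (QP : Q *m P = 1%:M).
Let cj (X : 'M[R]_3) := P *m X *m Q.

Lemma cjM X Y : cj X *m cj Y = cj (X *m Y).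
Proof. by rewrite /cj !mulmxA -(mulmxA _ Q P) QP mulmx1. Qed.

Lemma cj_comm X Y : comm3R (cj X) (cj Y) = cj (comm3R X Y).
Proof. by rewrite /comm3R !cjM /cj mulmxBr mulmxBl. Qed.

Lemma cj1 : cj 1%:M = 1%:M.
Proof. by rewrite /cj mulmx1 PQ. Qed.

Lemma nine_cj A B : nineR (cj A) (cj B) = map cj (nineR A B).
Proof. by rewrite /nineR /= !cj_comm !cjM cj1. Qed.

Lemma det_cj X : \det (cj X) = \det X.
Proof.
rewrite /cj !det_mulmx mulrC mulrA -det_mulmx QP det1 mul1r //.
Qed.

Lemma tr_cj X : \tr (cj X) = \tr X.
Proof. by rewrite /cj mxtrace_mulC mulmxA QP mul1mx. Qed.

Lemma det9_cj s : \det (cols9R (map cj s)) = \det (cols9R s).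
Proof.
have -> : map cj s = map (mulmx P) (map (mulmx^~ Q) s).
  by rewrite -map_comp; apply: eq_map => X /=; rewrite /cj mulmxA.
rewrite cols9_mulL cols9_mulR !det_mulmx det_LPm det_RQm mulrA -exprMn -det_mulmx PQ det1.
by rewrite expr1n mul1r.
Qed.

Lemma DR_cj A B : DR (cj A) (cj B) = DR A B.
Proof.
by rewrite /DR nine_cj det9_cj cj_comm det_cj tr_cj cjM tr_cj.
Qed.
End Conj.

End Engine.

Section Morph.
Variables (R S : comNzRingType) (f : {rmorphism R -> S}).

Lemma map_cols9 (s : seq 'M[R]_3) : map_mx f (cols9R s) = cols9R (map (map_mx f) s).
Proof.
apply/matrixP => k j; rewrite !mxE.
case: (ltnP j (size s)) => Hj; first by rewrite (nth_map 0) // mxE.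
by rewrite !nth_default ?size_map // !mxE rmorph0.
Qed.

Lemma map_comm3 (X Y : 'M[R]_3) : map_mx f (comm3R X Y) = comm3R (map_mx f X) (map_mx f Y).
Proof. by rewrite /comm3R map_mxB !map_mxM. Qed.

Lemma DR_map (A B : 'M[R]_3) : f (DR A B) = DR (map_mx f A) (map_mx f B).
Proof.
rewrite /DR rmorphD !rmorphM /= rmorphB /= !rmorphXn -!det_map_mx -!trace_map_mx.
rewrite map_cols9 !map_mxM map_comm3 !rmorph_nat; congr (_ * \det (cols9R _) + _).
by rewrite /nineR /= map_mx1 !map_mxM !map_comm3.
Qed.
End Morph.
Section Dens.
Variable K : fieldType.
Hypothesis hK : [pchar K] =i pred0.

Lemma natr_inj_K : injective (fun n : nat => (n%:R : K)).
Proof.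
have H := (pcharf0P K).1 hK.
have side : forall m n, (m <= n)%N -> (m%:R : K) = n%:R -> m = n.
  move=> m n mn E; apply/eqP; rewrite eqn_leq mn /= -subn_eq0 -H natrB // E subrr //.
move=> m n /= E; case: (leqP m n) => mn; first exact: side.
by symmetry; apply: side; [exact: ltnW|].
Qed.

Lemma poly_eq0_many (p : {poly K}) (S : seq K) :
  (forall c, c \notin S -> p.[c] = 0) -> p = 0.
Proof.
move=> H.
set l := map (fun i : nat => (i%:R : K)) (iota 0 (size p + size S)).
have ul : uniq l by rewrite map_inj_uniq ?iota_uniq //; exact: natr_inj_K.
apply: (@roots_geq_poly_eq0 _ p (filter (fun x => x \notin S) l)).
- by apply/allP => x; rewrite mem_filter => /andP [xS _]; rewrite /root H.
- exact: filter_uniq.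
have : (count (fun x => x \in S) l <= size S)%N.
  rewrite -size_filter; apply: uniq_leq_size; first exact: filter_uniq.
  by move=> x; rewrite mem_filter => /andP [].
have := count_predC (fun x => x \in S) l.
rewrite size_filter size_map size_iota => E.
have -> : count (fun x => x \notin S) l = count (predC (fun x => x \in S)) l by [].
move=> E1; by rewrite -(leq_add2l (count (fun x => x \in S) l)) E addnC leq_add2l.
Qed.
End Dens.

Section Closed.
Variable K : closedFieldType.
Hypothesis hK : [pchar K] =i pred0.

Lemma map_mk33 (R S : comNzRingType) (f : {rmorphism R -> S}) (a b c d e g h i j : R) :
  map_mx f (mk33 a b c d e g h i j) = mk33 (f a) (f b) (f c) (f d) (f e) (f g) (f h) (f i) (f j).
Proof.
apply/matrixP => r s; rewrite !mxE.
by case: r => [[|[|[|]]] ?] //=; case: s => [[|[|[|]]] ?] //=.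
Qed.

Lemma dens1 (Mp : 'M[{poly K}]_3) (B : 'M[K]_3) (S : seq K) :
  (forall c, c \notin S -> DR (map_mx (horner_eval c) Mp) B = 0) ->
  forall c, DR (map_mx (horner_eval c) Mp) B = 0.
Proof.
have E : forall c, DR (map_mx (horner_eval c) Mp) B = (DR Mp (map_mx polyC B)).[c].
  move=> c; rewrite -horner_evalE DR_map; congr (DR _ _).
  by apply/matrixP => i j; rewrite !mxE; exact: (esym (hornerC _ _)).
move=> H c; rewrite (E c).
suff -> : DR Mp (map_mx polyC B) = 0 by rewrite horner0.
by apply: (@poly_eq0_many _ hK _ S) => c' /H; rewrite (E c').
Qed.

Lemma Dtri_distinct (a x p y z q : K) (B : 'M[K]_3) :
  a != p -> p != q -> a != q -> DR (mk33 a 0 0 x p 0 y z q) B = 0.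
Proof.
move=> ap pq aq.
have ap' : a - p != 0 by rewrite subr_eq0.
have pq' : p - q != 0 by rewrite subr_eq0.
have aq' : a - q != 0 by rewrite subr_eq0.
have [u ->] : exists u, x = u * (a - p) by exists (x / (a - p)); rewrite divfK.
have [w ->] : exists w, z = w * (p - q) by exists (z / (p - q)); rewrite divfK.
have [v ->] : exists v, y = v * (a - q) - w * (p - q) * u.
  by exists ((y + w * (p - q) * u) / (a - q)); rewrite divfK // addrK.
set U := mk33 1 0 0 u 1 0 v w 1.
set Ui := mk33 1 0 0 (-u) 1 0 (u * w - v) (-w) 1.
have UiU : Ui *m U = 1%:M by rewrite mk33M mk33_1; congr mk33; ring.
have UUi : U *m Ui = 1%:M by rewrite mk33M mk33_1; congr mk33; ring.
rewrite -(DR_cj UiU UUi).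
have -> : Ui *m mk33 a 0 0 (u * (a - p)) p 0 (v * (a - q) - w * (p - q) * u) (w * (p - q)) q *m U
   = mk33 a 0 0 0 p 0 0 0 q by rewrite !mk33M; congr mk33; ring.
by rewrite (mx33E (Ui *m B *m U)) Ddiag.
Qed.

Lemma Dtri (a x p y z q : K) (B : 'M[K]_3) : DR (mk33 a 0 0 x p 0 y z q) B = 0.
Proof.
have hev : forall (a x p y z q : K), mk33 a 0 0 x p 0 y z q =
   map_mx (horner_eval p) (mk33 a%:P 0 0 x%:P 'X 0 y%:P z%:P q%:P).
  by move=> *; rewrite map_mk33 /= !horner_evalE !hornerC hornerX ?rmorph0.
have hevq : forall (a x p y z q : K), mk33 a 0 0 x p 0 y z q =
   map_mx (horner_eval q) (mk33 a%:P 0 0 x%:P p%:P 0 y%:P z%:P 'X).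
  by move=> *; rewrite map_mk33 /= !horner_evalE !hornerC hornerX ?rmorph0.
have step : forall q', q' != a -> forall p', DR (mk33 a 0 0 x p' 0 y z q') B = 0.
  move=> q' qa p'; rewrite hev; apply: (@dens1 _ _ [:: a; q']) => c.
  rewrite !inE negb_or => /andP [ca cq].
  by rewrite -hev Dtri_distinct // 1?eq_sym // eq_sym.
rewrite hevq; apply: (@dens1 _ _ [:: a]) => c; rewrite inE => ca.
by rewrite -hevq step.
Qed.
End Closed.

Section Trig.
Variable K : closedFieldType.

Lemma e33_mk33 (a b c d e f g h i : K) :
  [/\ e33 (mk33 a b c d e f g h i) 0 1 = b, e33 (mk33 a b c d e f g h i) 0 2 = c
    & e33 (mk33 a b c d e f g h i) 1 2 = f].
Proof. by rewrite /e33 !mxE !inordK. Qed.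

Lemma e33_01 (a b c d e f g h i : K) : e33 (mk33 a b c d e f g h i) 0 1 = b.
Proof. by rewrite /e33 !mxE !inordK. Qed.
Lemma e33_02 (a b c d e f g h i : K) : e33 (mk33 a b c d e f g h i) 0 2 = c.
Proof. by rewrite /e33 !mxE !inordK. Qed.
Lemma e33_12 (a b c d e f g h i : K) : e33 (mk33 a b c d e f g h i) 1 2 = f.
Proof. by rewrite /e33 !mxE !inordK. Qed.

Lemma step2 (l b c d e f g : K) : exists P Q : 'M[K]_3,
  [/\ P *m Q = 1%:M, Q *m P = 1%:M, e33 (P *m mk33 l 0 0 b c d e f g *m Q) 0 1 = 0,
      e33 (P *m mk33 l 0 0 b c d e f g *m Q) 0 2 = 0 &
      e33 (P *m mk33 l 0 0 b c d e f g *m Q) 1 2 = 0].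
Proof.
have [d0|dn0] := eqVneq d 0.
  exists 1%:M, 1%:M; rewrite !mul1mx mulmx1; have [-> -> ->] := e33_mk33 l 0 0 b c d e f g.
  by rewrite d0.
pose q := ('X - (c + g)%:P) * 'X + (c * g - d * f)%:P.
have : size q != 1%N.
  rewrite /q size_MXaddC size_XsubC /=.
  by case: ifP => // /andP [/eqP H _]; move: (size_XsubC (c + g)); rewrite H size_poly0.
case/closed_rootP => mu; rewrite /root /q !hornerE => /eqP Hmu0.
have Hmu : (mu - (c + g)) * mu + (c * g - d * f) = 0 by rewrite -[RHS]Hmu0 addrA.
have Hf : f = ((mu - (c + g)) * mu + c * g) / d.
  apply: (mulIf dn0); rewrite divfK //.
  have -> : (mu - (c + g)) * mu + c * g = (mu - (c + g)) * mu + (c * g - d * f) + f * d by ring.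
  by rewrite Hmu add0r.
set R := mk33 1 0 0 0 0 d 0 1 (mu - c).
set Ri := mk33 1 0 0 0 (- (mu - c) / d) 1 0 d^-1 0.
exists Ri, R; split.
- by rewrite mk33M mk33_1; congr mk33; field.
- by rewrite mk33M mk33_1; congr mk33; field.
all: rewrite !mk33M ?e33_01 ?e33_02 ?e33_12 ?Hf; field.
all: try exact: dn0.
Qed.

Lemma step1 (a00 a01 a02 a10 a11 a12 a20 a21 a22 v0 v1 v2 l : K) :
  [|| v0 != 0, v1 != 0 | v2 != 0] ->
  v0 * a00 + v1 * a10 + v2 * a20 = l * v0 ->
  v0 * a01 + v1 * a11 + v2 * a21 = l * v1 ->
  v0 * a02 + v1 * a12 + v2 * a22 = l * v2 ->
  exists P Q : 'M[K]_3,
  [/\ P *m Q = 1%:M, Q *m P = 1%:M,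
      e33 (P *m mk33 a00 a01 a02 a10 a11 a12 a20 a21 a22 *m Q) 0 1 = 0 &
      e33 (P *m mk33 a00 a01 a02 a10 a11 a12 a20 a21 a22 *m Q) 0 2 = 0].
Proof.
have [->|v0n] := eqVneq v0 0; last first.
  move=> _ E0 E1 E2.
  exists (mk33 v0 v1 v2 0 1 0 0 0 1), (mk33 v0^-1 (- v1 / v0) (- v2 / v0) 0 1 0 0 0 1); split;
    try (by rewrite mk33M mk33_1; congr mk33; field; do ?[done|assumption]);
    rewrite mk33M E0 E1 E2 mk33M ?e33_01 ?e33_02; field; do ?[done|exact: v0n].
have [->|v1n] := eqVneq v1 0; last first.
  move=> _ E0 E1 E2.
  exists (mk33 0 v1 v2 1 0 0 0 0 1), (mk33 0 1 0 v1^-1 0 (- v2 / v1) 0 0 1); split;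
    try (by rewrite mk33M mk33_1; congr mk33; field; do ?[done|assumption]);
    rewrite mk33M E0 E1 E2 mk33M ?e33_01 ?e33_02; field; do ?[done|exact: v1n].
have [->|v2n] := eqVneq v2 0; first by [].
move=> _ E0 E1 E2.
exists (mk33 0 0 v2 1 0 0 0 1 0), (mk33 0 1 0 0 0 1 v2^-1 0 0); split;
  try (by rewrite mk33M mk33_1; congr mk33; field; do ?[done|assumption]);
  rewrite mk33M E0 E1 E2 mk33M ?e33_01 ?e33_02; field; do ?[done|exact: v2n].
Qed.

Definition mk13 (a b c : K) : 'rV[K]_3 := \row_(j < 3) nth 0 [:: a; b; c] j.

Lemma rv3E (v : 'rV[K]_3) : v = mk13 (v 0 (inord 0)) (v 0 (inord 1)) (v 0 (inord 2)).
Proof.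
apply/matrixP => i j; rewrite !mxE ord1.
by case: j => [[|[|[|]]] Hj] //=; congr (v _ _); apply/val_inj; rewrite /= inordK.
Qed.

Lemma mk13M (a b c a00 a01 a02 a10 a11 a12 a20 a21 a22 : K) :
  mk13 a b c *m mk33 a00 a01 a02 a10 a11 a12 a20 a21 a22 =
  mk13 (a * a00 + b * a10 + c * a20) (a * a01 + b * a11 + c * a21) (a * a02 + b * a12 + c * a22).
Proof.
apply/matrixP => i j; rewrite !mxE !big_ord_recl big_ord0 !mxE /=.
by case: j => [[|[|[|]]] ?] //=; ring.
Qed.

Lemma mk13Z (l a b c : K) : l *: mk13 a b c = mk13 (l * a) (l * b) (l * c).
Proof. by apply/matrixP => i j; rewrite !mxE; case: j => [[|[|[|]]] ?]. Qed.

Lemma mk13_inj (a b c a' b' c' : K) : mk13 a b c = mk13 a' b' c' -> [/\ a = a', b = b' & c = c'].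
Proof.
move=> E; have F := fun j => congr1 (fun M : 'rV[K]_3 => M 0 (inord j)) E.
by move: (F 0%N) (F 1%N) (F 2%N); rewrite /= !mxE !inordK.
Qed.

Lemma trig (A : 'M[K]_3) : exists P Q : 'M[K]_3,
  [/\ P *m Q = 1%:M, Q *m P = 1%:M, e33 (P *m A *m Q) 0 1 = 0,
      e33 (P *m A *m Q) 0 2 = 0 & e33 (P *m A *m Q) 1 2 = 0].
Proof.
have : exists l, root (char_poly A) l by apply/closed_rootP; rewrite size_char_poly.
case=> l; rewrite -eigenvalue_root_char => /eigenvalueP [v Hv vn0].
rewrite (rv3E v) (mx33E A) mk13M mk13Z in Hv.
case/mk13_inj: Hv => E0 E1 E2.
have nz : [|| v 0 (inord 0) != 0, v 0 (inord 1) != 0 | v 0 (inord 2) != 0].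
  apply: contraR vn0; rewrite !negb_or !negbK => /and3P [/eqP H0 /eqP H1 /eqP H2].
  by apply/eqP; rewrite (rv3E v) H0 H1 H2; apply/matrixP => i j; rewrite !mxE; case: j => [[|[|[|]]] ?].
have [P1 [Q1 [PQ1 QP1 Z1 Z2]]] := step1 nz E0 E1 E2.
rewrite -(mx33E A) in Z1 Z2.
have [P2 [Q2 [PQ2 QP2 Y1 Y2 Y3]]] := step2 (e33 (P1 *m A *m Q1) 0 0) (e33 (P1 *m A *m Q1) 1 0)
  (e33 (P1 *m A *m Q1) 1 1) (e33 (P1 *m A *m Q1) 1 2) (e33 (P1 *m A *m Q1) 2 0)
  (e33 (P1 *m A *m Q1) 2 1) (e33 (P1 *m A *m Q1) 2 2).
have HA1 : P1 *m A *m Q1 = mk33 (e33 (P1 *m A *m Q1) 0 0) 0 0 (e33 (P1 *m A *m Q1) 1 0)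
  (e33 (P1 *m A *m Q1) 1 1) (e33 (P1 *m A *m Q1) 1 2) (e33 (P1 *m A *m Q1) 2 0)
  (e33 (P1 *m A *m Q1) 2 1) (e33 (P1 *m A *m Q1) 2 2).
  by rewrite {1}(mx33E (P1 *m A *m Q1)) Z1 Z2.
rewrite -HA1 in Y1 Y2 Y3.
have EE : P2 *m P1 *m A *m (Q1 *m Q2) = P2 *m (P1 *m A *m Q1) *m Q2 by rewrite !mulmxA.
exists (P2 *m P1), (Q1 *m Q2); rewrite EE; split => //.
- by rewrite mulmxA -(mulmxA P2) PQ1 mulmx1 PQ2.
- by rewrite mulmxA -(mulmxA Q1) QP2 mulmx1 QP1.
Qed.

Lemma DR0 (hK : [pchar K] =i pred0) (A B : 'M[K]_3) : DR A B = 0.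
Proof.
have [P [Q [PQ QP Z1 Z2 Z3]]] := trig A.
rewrite -(DR_cj PQ QP A B) (mx33E (P *m A *m Q)) Z1 Z2 Z3.
exact: (Dtri hK).
Qed.
End Trig.

Lemma det9_conv (K : fieldType) (A B : 'M[K]_3) :
  det9 (nine A B) = \det (cols9R (nineR A B)).
Proof. by []. Qed.

Lemma comm3_conv (K : fieldType) (A B : 'M[K]_3) : comm3 A B = comm3R A B.
Proof. by []. Qed.

Unset Implicit Arguments.

Theorem theorem7 (K : closedFieldType) (hK : [pchar K] =i pred0)
  (A B : 'M[K]_3) :
  det9 (nine A B) = - 9%:R * (\det (comm3 A B)) ^+ 2 * H3 (comm3 A B)
  /\ (\det (comm3 A B) != 0 -> H3 (comm3 A B) != 0 ->
      basis_of fullv (nine A B)).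
Proof.
have nat0 := (pcharf0P K).1 hK.
have two : (2%:R : K) != 0 by rewrite nat0.
have nine0 : (9%:R : K) != 0 by rewrite nat0.
have h := DR0 hK A B; rewrite /DR in h.
have E1 : det9 (nine A B) = - 9%:R * (\det (comm3 A B)) ^+ 2 * H3 (comm3 A B).
  have key : forall x y z : K, 2%:R * x + 9%:R * y * z = 0 -> x = - 9%:R * y * (z / 2%:R).
    move=> x y z /eqP; rewrite addr_eq0 => /eqP hx.
    apply: (mulfI two); rewrite hx; field; exact: two.
  rewrite /H3; exact: (key _ _ _ h).
split => // dC HC.
have d9 : det9 (nine A B) != 0.
  rewrite E1; apply: mulf_neq0; last exact: HC.
  by apply: mulf_neq0; [rewrite oppr_eq0 | apply: expf_neq0].
rewrite basisEfree subvf dimvf dim_matrix /= andbT.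
rewrite -[nine A B]/(tval (in_tuple (nine A B))); apply/freeP => k Hk.
set M := cols9 (nine A B).
have Mu : M \in unitmx by rewrite unitmxE unitfE.
pose kc : 'cV[K]_9 := \col_i k i.
have Mk : M *m kc = 0.
  apply/matrixP => r c; rewrite !mxE.
  have := congr1 (fun X : 'M[K]_3 => X (inord (r %/ 3)) (inord (r %% 3))) Hk.
  rewrite /= summxE mxE => E; apply: (etrans _ E).
  by apply: eq_bigr => j _; rewrite !mxE mulrC.
have : kc = 0 by rewrite -(mulKmx Mu kc) Mk mulmx0.
move=> kc0 i; have := congr1 (fun X : 'cV[K]_9 => X i 0) kc0.
by rewrite !mxE.
Qed.
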